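(* Let $T>0$, $0<\eta<T$, $\alpha >\frac{2T}{\eta ^{2}}$ and $\beta\geq0$. If $y\in C([0,T],[0,\infty))$, then the problem \[ u''(t)+y(t)=0,\ t\in(0,T),\qquad u(0)=\beta u(\eta),\quad u(T)=\alpha\int_0^\eta u(s)\,ds \] has no positive solutions.
   Context: A solution is a function $u\in C^2([0,T])$ satisfying the differential equation on $(0,T)$ and the two boundary conditions; a positive solution is a solution $u$ with $u(t)>0$ for $0<t<T$. *)

(* Defs.v *)
From Stdlib Require Import Reals.
From Coquelicot Require Import Coquelicot.
Open Scope R_scope.

Definition deriv_on (a b : R) (f f' : R -> R) : Prop :=
  forall t, a <= t <= b ->
    filterlim (fun s => (f s - f t) / (s - t))
      (within (fun s => a <= s <= b /\ s <> t) (locally t)) (locally (f' t)).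

Definition cont_on (a b : R) (f : R -> R) : Prop :=
  forall t, a <= t <= b ->
    filterlim f (within (fun s => a <= s <= b) (locally t)) (locally (f t)).

Definition is_solution (T eta alpha beta : R) (y u : R -> R) : Prop :=
  exists u1 u2 : R -> R,
    deriv_on 0 T u u1 /\ deriv_on 0 T u1 u2 /\ cont_on 0 T u2 /\
    (forall t, 0 < t < T -> u2 t + y t = 0) /\
    u 0 = beta * u eta /\
    u T = alpha * RInt u 0 eta.

Definition is_positive_solution (T eta alpha beta : R) (y u : R -> R) : Prop :=
  is_solution T eta alpha beta y u /\ (forall t, 0 < t < T -> u t > 0).

(* Main.v *)
Require Import Defs.
From Stdlib Require Import Reals Lra.
From Coquelicot Require Import Coquelicot.
Open Scope R_scope.

Lemma deriv_eps a b f f' t : deriv_on a b f f' -> a <= t <= b ->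
  forall eps, 0 < eps -> exists d, 0 < d /\ forall s, a <= s <= b -> s <> t ->
    Rabs (s - t) < d -> Rabs ((f s - f t) / (s - t) - f' t) < eps.
Proof.
  intros D Ht eps Heps.
  specialize (D t Ht).
  apply filterlim_locally with (eps := mkposreal eps Heps) in D.
  destruct D as [d Hd].
  exists d; split; [apply cond_pos|].
  intros s Hs Hst Hsd.
  specialize (Hd s Hsd (conj Hs Hst)).
  exact Hd.
Qed.

Lemma cont_within a b f f' t : deriv_on a b f f' -> a <= t <= b ->
  forall eps, 0 < eps -> exists d, 0 < d /\ forall s, a <= s <= b ->
    Rabs (s - t) < d -> Rabs (f s - f t) < eps.
Proof.
  intros D Ht eps Heps.
  destruct (deriv_eps a b f f' t D Ht 1 Rlt_0_1) as [d [Hd H]].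
  pose (KK := Rabs (f' t) + 1).
  assert (HK : 0 < KK) by (unfold KK; pose proof (Rabs_pos (f' t)); lra).
  exists (Rmin d (eps / KK)); split.
  { apply Rmin_pos; [lra| apply Rdiv_lt_0_compat; lra]. }
  intros s Hs Hsd.
  destruct (Req_dec s t) as [E|E].
  { subst s. rewrite Rminus_diag, Rabs_R0. lra. }
  assert (Hs1 : Rabs (s - t) < d) by (pose proof (Rmin_l d (eps/KK)); lra).
  assert (Hs2 : Rabs (s - t) < eps / KK) by (pose proof (Rmin_r d (eps/KK)); lra).
  specialize (H s Hs E Hs1).
  assert (Hq : Rabs ((f s - f t) / (s - t)) < KK).
  { unfold KK. pose proof (Rabs_triang ((f s - f t) / (s - t) - f' t) (f' t)).
    replace ((f s - f t) / (s - t) - f' t + f' t) with ((f s - f t) / (s - t)) in H0 by ring.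
    lra. }
  assert (Hne : s - t <> 0) by lra.
  replace (f s - f t) with ((f s - f t) / (s - t) * (s - t)) by (field; auto).
  rewrite Rabs_mult.
  assert (Rabs (s - t) * KK < eps).
  { apply Rmult_lt_reg_r with (/ KK). apply Rinv_0_lt_compat; lra.
    replace (Rabs (s - t) * KK * / KK) with (Rabs (s - t)) by (field; lra). exact Hs2. }
  pose proof (Rabs_pos (s - t)). pose proof (Rabs_pos ((f s - f t) / (s - t))).
  nra.
Qed.

Definition clamp (T x : R) := Rmax 0 (Rmin T x).

Lemma clamp_id T x : 0 <= x <= T -> clamp T x = x.
Proof. intros H. unfold clamp, Rmax, Rmin; repeat destruct Rle_dec; lra. Qed.

Lemma clamp_in T x : 0 <= T -> 0 <= clamp T x <= T.
Proof. intros H. unfold clamp, Rmax, Rmin; repeat destruct Rle_dec; lra. Qed.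

Lemma clamp_lip T x y : 0 <= T -> Rabs (clamp T y - clamp T x) <= Rabs (y - x).
Proof. intros H. unfold clamp, Rmax, Rmin; repeat destruct Rle_dec; split_Rabs; lra. Qed.

Lemma cont_clamp T f f' x : 0 < T -> deriv_on 0 T f f' ->
  continuity_pt (fun x => f (clamp T x)) x.
Proof.
  intros HT D eps Heps.
  destruct (cont_within 0 T f f' (clamp T x) D (clamp_in T x ltac:(lra)) eps Heps)
    as [d [Hd H]].
  exists d; split; [exact Hd|].
  intros y [_ Hy]. unfold R_dist in *. simpl in *. unfold R_dist in *.
  apply H. apply clamp_in; lra.
  pose proof (clamp_lip T x y ltac:(lra)). lra.
Qed.

Lemma deriv_interior T f f' h x : deriv_on 0 T f f' ->
  (forall s, 0 <= s <= T -> h s = f s) -> 0 < x < T ->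
  derivable_pt_lim h x (f' x).
Proof.
  intros D Hh Hx eps Heps.
  destruct (deriv_eps 0 T f f' x D ltac:(lra) eps Heps) as [d [Hd H]].
  assert (Hp : 0 < Rmin d (Rmin x (T - x))).
  { repeat apply Rmin_pos; lra. }
  exists (mkposreal _ Hp). intros k Hk Hkd. simpl in Hkd.
  pose proof (Rmin_l d (Rmin x (T - x))).
  pose proof (Rmin_r d (Rmin x (T - x))).
  pose proof (Rmin_l x (T - x)). pose proof (Rmin_r x (T - x)).
  assert (Hxk : 0 <= x + k <= T) by (split_Rabs; lra).
  rewrite (Hh (x + k) Hxk), (Hh x ltac:(lra)).
  specialize (H (x + k) Hxk ltac:(lra)).
  replace (x + k - x) with k in H by ring.
  apply H. lra.
Qed.

Lemma mvt_open f f' a b : a < b ->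
  (forall c, a < c < b -> derivable_pt_lim f c (f' c)) ->
  (forall c, a <= c <= b -> continuity_pt f c) ->
  exists c, a < c < b /\ f b - f a = f' c * (b - a).
Proof.
  intros Hab Hd Hc.
  pose (pr1 := fun c (P : a < c < b) => exist _ (f' c) (Hd c P) : derivable_pt f c).
  pose (pr2 := fun c (P : a < c < b) => derivable_pt_id c).
  destruct (MVT f id a b pr1 pr2 Hab Hc
     (fun c _ => derivable_continuous_pt _ _ (derivable_pt_id c))) as [c [P E]].
  exists c; split; [exact P|].
  assert (E1 : derive_pt f c (pr1 c P) = f' c) by reflexivity.
  assert (E2 : derive_pt id c (pr2 c P) = 1).
  { apply derive_pt_eq_0. apply derivable_pt_lim_id. }
  rewrite E1, E2 in E. unfold id in E. lra.
Qed.

Lemma RInt_lin c e : 0 <= e -> RInt (fun s => c * s) 0 e = c * e ^ 2 / 2.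
Proof.
  intros He.
  apply is_RInt_unique.
  assert (H := is_RInt_derive (fun s => c * s ^ 2 / 2) (fun s => c * s) 0 e).
  replace (c * e ^ 2 / 2) with (minus (c * e ^ 2 / 2) (c * 0 ^ 2 / 2)).
  2:{ unfold minus, plus, opp; simpl. field. }
  apply H.
  - intros x _. auto_derive; auto. field.
  - intros x _. apply continuity_pt_filterlim.
    apply continuity_pt_mult; [apply continuity_pt_const; intros ? ?; reflexivity|].
    apply derivable_continuous_pt, derivable_pt_id.
Qed.

Theorem lemma2p3 (T eta alpha beta : R) (y : R -> R) :
  0 < T -> 0 < eta < T -> alpha > 2 * T / eta ^ 2 -> beta >= 0 ->
  cont_on 0 T y -> (forall t, 0 <= t <= T -> y t >= 0) ->
  ~ exists u : R -> R, is_positive_solution T eta alpha beta y u.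
Proof.
  intros HT Heta Halpha Hbeta Hy Hy0
    [u [[u1 [u2 [D1 [D2 [C2 [Hode [H0 HTT]]]]]]] Hpos]].
  pose (g := fun x => u (clamp T x)).
  assert (Hgu : forall s, 0 <= s <= T -> g s = u s).
  { intros s Hs. unfold g. rewrite clamp_id; auto. }
  assert (Hgc : forall x, continuity_pt g x) by (intros; apply (cont_clamp T u u1); auto).
  assert (Hgd : forall x, 0 < x < T -> derivable_pt_lim g x (u1 x)).
  { intros x Hx. apply (deriv_interior T u u1); auto. }
  assert (Hu1d : forall x, 0 < x < T -> derivable_pt_lim u1 x (u2 x)).
  { intros x Hx. apply (deriv_interior T u1 u2); auto. }
  assert (Hmono : forall c1 c2, 0 < c1 -> c1 < c2 -> c2 < T -> u1 c2 <= u1 c1).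
  { intros c1 c2 H1 H2 H3.
    destruct (MVT_cor2 u1 u2 c1 c2 H2) as [c [Ec Hc]].
    { intros c Hc. apply Hu1d. lra. }
    assert (u2 c <= 0).
    { pose proof (Hode c ltac:(lra)). pose proof (Hy0 c ltac:(lra)). lra. }
    nra. }
  assert (Hu0 : 0 <= u 0).
  { destruct (Rle_dec 0 (u 0)) as [|Hn]; [assumption|exfalso].
    destruct (cont_within 0 T u u1 0 D1 ltac:(lra) (- u 0) ltac:(lra)) as [d [Hd H]].
    pose (s := Rmin (d / 2) (T / 2)).
    assert (Hs1 : s <= d/2) by apply Rmin_l.
    assert (Hs2 : s <= T/2) by apply Rmin_r.
    assert (Hs : 0 < s) by (apply Rmin_pos; lra).
    specialize (H s ltac:(lra)).
    assert (H3 : Rabs (s - 0) < d) by (rewrite Rminus_0_r, Rabs_pos_eq; lra).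
    specialize (H H3). pose proof (Hpos s ltac:(lra)).
    split_Rabs; lra. }
  assert (Hchord : forall s b, 0 < s -> s < b -> b <= T ->
            b * u s >= s * u b + (b - s) * u 0).
  { intros s b H1 H2 H3.
    destruct (mvt_open g u1 0 s H1) as [c1 [Hc1 E1]].
    { intros c Hc. apply Hgd. lra. }
    { intros; apply Hgc. }
    destruct (mvt_open g u1 s b H2) as [c2 [Hc2 E2]].
    { intros c Hc. apply Hgd. lra. }
    { intros; apply Hgc. }
    rewrite !Hgu in E1 by lra. rewrite !Hgu in E2 by lra.
    pose proof (Hmono c1 c2 ltac:(lra) ltac:(lra) ltac:(lra)).
    assert (u s - u 0 >= u1 c2 * s) by nra.
    nra. }
  assert (Hex : ex_RInt g 0 eta).
  { apply (ex_RInt_continuous (V := R_CompleteNormedModule)). intros z _. apply continuity_pt_filterlim. apply Hgc. }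
  assert (HI : RInt u 0 eta = RInt g 0 eta).
  { apply RInt_ext. intros x Hx. rewrite Rmin_left in Hx by lra.
    rewrite Rmax_right in Hx by lra. symmetry. apply Hgu. lra. }
  assert (Hexl : forall c, ex_RInt (fun s => c * s) 0 eta).
  { intros c. apply (ex_RInt_continuous (V := R_CompleteNormedModule)). intros z _. apply continuity_pt_filterlim.
    apply continuity_pt_mult; [apply continuity_pt_const; intros ? ?; reflexivity|].
    apply derivable_continuous_pt, derivable_pt_id. }
  assert (I1 : RInt g 0 eta >= u T / T * eta ^ 2 / 2).
  { rewrite <- RInt_lin by lra. apply Rle_ge. apply RInt_le; auto; try lra.
    intros x Hx. rewrite Hgu by lra.
    pose proof (Hchord x T ltac:(lra) ltac:(lra) ltac:(lra)).
    assert (x * u T <= T * u x) by nra.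
    replace (u T / T * x) with (x * u T / T) by (field; lra).
    apply Rmult_le_reg_r with T; [lra|].
    replace (x * u T / T * T) with (x * u T) by (field; lra). lra. }
  assert (I2 : RInt g 0 eta >= u eta / eta * eta ^ 2 / 2).
  { rewrite <- RInt_lin by lra. apply Rle_ge. apply RInt_le; auto; try lra.
    intros x Hx. rewrite Hgu by lra.
    pose proof (Hchord x eta ltac:(lra) ltac:(lra) ltac:(lra)).
    assert (x * u eta <= eta * u x) by nra.
    replace (u eta / eta * x) with (x * u eta / eta) by (field; lra).
    apply Rmult_le_reg_r with eta; [lra|].
    replace (x * u eta / eta * eta) with (x * u eta) by (field; lra). lra. }
  rewrite <- HI in I1, I2.
  remember (RInt u 0 eta) as I.
  pose proof (Hpos eta ltac:(lra)).
  assert (HIp : I > 0).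
  { replace (u eta / eta * eta ^ 2 / 2) with (u eta * eta / 2) in I2 by (field; lra).
    nra. }
  assert (Ha : alpha * eta ^ 2 > 2 * T).
  { assert (0 < eta ^ 2) by (apply pow_lt; lra).
    apply Rmult_gt_compat_r with (r := eta ^ 2) in Halpha; [|lra].
    replace (2 * T / eta ^ 2 * eta ^ 2) with (2 * T) in Halpha by (field; lra). lra. }
  assert (Hap : alpha > 0).
  { assert (0 < eta ^ 2) by (apply pow_lt; lra). nra. }
  assert (E : 2 * T * I >= u T * eta ^ 2).
  { apply Rmult_ge_compat_l with (r := 2 * T) in I1; [|lra].
    replace (2 * T * (u T / T * eta ^ 2 / 2)) with (u T * eta ^ 2) in I1 by (field; lra).
    lra. }
  rewrite HTT in E. nra.
Qed.
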